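(* Let $\{d_i,\mathcal F_i\}_{i=1}^n$ be a (real-valued) martingale difference sequence. Suppose $v_{i-1}$, $i\in[n]$, are positive $\mathcal F_{i-1}$-measurable random variables such that $\mathbb E[\exp(\lambda d_i)\mid\mathcal F_{i-1}]\le\exp\!\left(\frac{\lambda^2}{2}v_{i-1}\right)$ for all $i\in[n]$ and all $\lambda>0$. Let $S_t=\sum_{i=1}^t d_i$ and $V_t=\sum_{i=1}^t v_{i-1}$. Let $\alpha_i\ge0$ and $\alpha=\max_{i\in[n]}\alpha_i$. Then for all $x,\beta>0$, \[ \Pr\!\left[\bigcup_{t=1}^n\left\{S_t\ge x\ \text{and}\ V_t\le\sum_{i=1}^t\alpha_i d_i+\beta\right\}\right]\le\exp\!\left(-\frac{x}{4\alpha+8\beta/x}\right). \]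
   Context: $[n]=\{1,\dots,n\}$. *)

(* Defs.v *)
From HB Require Import structures.
From mathcomp Require Import all_boot all_order all_algebra.
From mathcomp Require Import all_classical all_reals all_analysis.
Set Implicit Arguments. Unset Strict Implicit. Unset Printing Implicit Defensive.
Import Order.TTheory GRing.Theory Num.Theory.
Local Open Scope classical_set_scope.
Local Open Scope ring_scope.

Definition sub_sigma_algebra {d} {T : measurableType d} (G : set (set T)) :=
  sigma_algebra setT G /\ G `<=` measurable.

Definition measurable_wrt {d} {T : measurableType d} {R : realType}
  (G : set (set T)) (X : T -> R) :=
  forall B : set R, measurable B -> G (X @^-1` B).

Definition filtration_upto {d} {T : measurableType d}
  (F : nat -> set (set T)) (n : nat) :=
  (forall i, (i <= n)%N -> sub_sigma_algebra (F i)) /\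
  (forall i, (i < n)%N -> F i `<=` F i.+1).

(* {d_i, F_i}_{i=1}^n is a martingale difference sequence:
   d_i is F_i-measurable, integrable, and E[d_i | F_{i-1}] = 0, the latter
   written through the defining property of conditional expectation:
   int_A d_i dP = 0 for every A in F_{i-1}. *)
Definition mart_diff_seq {d} {T : measurableType d} {R : realType}
  (P : probability T R) (F : nat -> set (set T)) (dd : nat -> T -> R)
  (n : nat) :=
  filtration_upto F n /\
  forall i, (1 <= i <= n)%N ->
    [/\ measurable_wrt (F i) (dd i),
        P.-integrable setT (EFin \o dd i) &
        forall A, F i.-1 A -> (\int[P]_(x in A) (dd i x)%:E = 0)%E].

(* For nonnegative X and G-measurable real Y:  E[X | G] <= Y a.s.,
   expressed by the defining property of conditional expectation:
   int_A X dP <= int_A Y dP for all A in G. *)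
Definition condexp_le {d} {T : measurableType d} {R : realType}
  (P : probability T R) (G : set (set T)) (X Y : T -> R) :=
  forall A, G A -> (\int[P]_(x in A) (X x)%:E <= \int[P]_(x in A) (Y x)%:E)%E.

(* Main.v *)
Require Import Defs.
From HB Require Import structures.
From mathcomp Require Import all_boot all_order all_algebra.
From mathcomp Require Import all_classical all_reals all_analysis.
From mathcomp Require Import measurable_realfun ring lra.
Import Order.TTheory GRing.Theory Num.Theory.
Local Open Scope classical_set_scope.
Local Open Scope ring_scope.
Local Open Scope ereal_scope.

Section Ext.
Context d (T : measurableType d) (R : realType) (P : probability T R).
Variable G : set (set T).
Hypothesis HG : Defs.sub_sigma_algebra G.

Lemma GE : @measurable _ (g_sigma_algebraType G) = G.
Proof. exact: measurable_g_measurableTypeE HG.1. Qed.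

Lemma GI A B : G A -> G B -> G (A `&` B).
Proof. by move=> hA hB; have := @measurableI _ (g_sigma_algebraType G) A B; rewrite GE; apply. Qed.
Arguments GI {A B}.

Lemma G0 : G set0.
Proof. by have := @measurable0 _ (g_sigma_algebraType G); rewrite GE. Qed.

Lemma Gm A : G A -> measurable A.
Proof. exact: HG.2. Qed.
Arguments Gm {A}.

Lemma wrt_meas {g : T -> R} : measurable_wrt G g -> measurable_fun setT g.
Proof. by move=> mg _ B mB; rewrite setTI; apply: Gm; apply: mg. Qed.

Variables X Y : T -> R.
Hypotheses (X0 : forall w, (0 <= X w)%R) (Y0 : forall w, (0 <= Y w)%R).
Hypotheses (mX : measurable_fun setT X) (mY : measurable_fun setT Y).
Hypothesis hXY : condexp_le P G X Y.

Definition good (s : T -> R) := (forall w, (0 <= s w)%R) /\ measurable_fun setT s /\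
  forall A, G A -> \int[P]_(w in A) (s w * X w)%:E <= \int[P]_(w in A) (s w * Y w)%:E.

Lemma good_ext s t : (forall w, s w = t w) -> good s -> good t.
Proof. by move=> e; have -> : s = t by apply/funext. Qed.
Arguments good_ext {s t}.

Lemma intI (Z : T -> R) A B : measurable A -> measurable B ->
  \int[P]_(w in A) (\1_B w * Z w)%:E = \int[P]_(w in A `&` B) (Z w)%:E.
Proof.
move=> mA mB; rewrite integral_mkcondr; apply: eq_integral => w _.
by rewrite /patch indicE; case: ifP => _; rewrite ?mul1r ?mul0r.
Qed.

Lemma good_indic c B : (0 <= c)%R -> G B -> good (fun w => c * \1_B w)%R.
Proof.
move=> c0 GB; split; first by move=> w; rewrite mulr_ge0.
split; first by apply: measurable_funM; [exact: measurable_cst | apply: measurable_indic; exact: Gm GB].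
move=> A GA.
have mA := Gm GA; have mB := Gm GB.
under eq_integral do rewrite -mulrA EFinM.
under [X in _ <= X]eq_integral do rewrite -mulrA EFinM.
rewrite ge0_integralZl_EFin //; last 2 first.
- by move=> w _; rewrite lee_fin mulr_ge0.
- by apply/measurable_EFinP; apply: measurable_funM; [exact: measurable_indic|exact: measurable_funTS].
rewrite ge0_integralZl_EFin //; last 2 first.
- by move=> w _; rewrite lee_fin mulr_ge0.
- by apply/measurable_EFinP; apply: measurable_funM; [exact: measurable_indic|exact: measurable_funTS].
rewrite !intI //; apply: lee_wpmul2l; first by rewrite lee_fin.
exact: hXY (GI GA GB).
Qed.

Lemma good0 : good (fun _ => 0%R).
Proof.
have h : good (fun w => 0 * \1_set0 w)%R by apply: good_indic => //; exact: G0.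
by apply: (good_ext _ h) => w; rewrite mul0r.
Qed.

Lemma good_add {s t} : good s -> good t -> good (fun w => s w + t w)%R.
Proof.
move=> [s0 [ms hs]] [t0 [mt ht]]; split; first by move=> w; rewrite addr_ge0.
split; first exact: measurable_funD.
move=> A GA; have mA := Gm GA.
under eq_integral do rewrite mulrDl EFinD.
under [X in _ <= X]eq_integral do rewrite mulrDl EFinD.
rewrite ge0_integralD //; last 4 first.
- by move=> w _; rewrite lee_fin mulr_ge0.
- by apply/measurable_EFinP; apply: measurable_funM; exact: measurable_funTS.
- by move=> w _; rewrite lee_fin mulr_ge0.
- by apply/measurable_EFinP; apply: measurable_funM; exact: measurable_funTS.
rewrite ge0_integralD //; last 4 first.
- by move=> w _; rewrite lee_fin mulr_ge0.
- by apply/measurable_EFinP; apply: measurable_funM; exact: measurable_funTS.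
- by move=> w _; rewrite lee_fin mulr_ge0.
- by apply/measurable_EFinP; apply: measurable_funM; exact: measurable_funTS.
by apply: leeD; [exact: hs|exact: ht].
Qed.

Lemma good_sum (I : Type) (r : seq I) (Pr : pred I) (F : I -> T -> R) :
  (forall k, good (F k)) -> good (fun w => \sum_(k <- r | Pr k) F k w)%R.
Proof.
move=> hF; elim: r => [|a r IH].
  by apply: (good_ext _ good0) => w; rewrite big_nil.
case: (boolP (Pr a)) => Pa.
  have h := good_add (hF a) IH.
  by apply: (good_ext _ h) => w; rewrite big_cons Pa.
by apply: (good_ext _ IH) => w; rewrite big_cons (negbTE Pa).
Qed.


Variable g : T -> R.
Hypotheses (g0 : forall w, (0 <= g w)%R) (mg : measurable_wrt G g).

Lemma G_dyadic n k : G (dyadic_approx setT (EFin \o g) n k).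
Proof.
rewrite /dyadic_approx; case: ifP => _; last exact: G0.
set S := [set` _].
have -> : [set: T] `&` [set x | (EFin \o g) x \in EFin @` S] = g @^-1` S.
  apply/seteqP; split => w /=.
    by move=> [_]; rewrite inE => -[r Sr [<-]].
  by move=> Sg; split => //; rewrite inE; exists (g w).
by apply: mg; exact: measurable_itv.
Qed.

Lemma G_integer n : G (integer_approx setT (EFin \o g) n).
Proof.
rewrite /integer_approx.
have -> : [set: T] `&` [set x | (n%:R%:E <= (EFin \o g) x)] = g @^-1` `[n%:R, +oo[.
  apply/seteqP; split => w /=.
    by move=> [_]; rewrite lee_fin in_itv /= andbT.
  by rewrite in_itv /= andbT lee_fin.
by apply: mg; exact: measurable_itv.
Qed.

Lemma good_approx n : good (approx setT (EFin \o g) n).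
Proof.
apply: good_add.
  apply: good_sum => k; apply: good_indic; last exact: G_dyadic.
  by rewrite mulr_ge0.
by apply: good_indic => //; exact: G_integer.
Qed.


Lemma ext_le A : G A ->
  \int[P]_(w in A) (g w * X w)%:E <= \int[P]_(w in A) (g w * Y w)%:E.
Proof.
move=> GA; have mA := Gm GA.
pose a := approx setT (EFin \o g).
have ga n := good_approx n.
have f0 : forall w, [set: T] w -> 0 <= (EFin \o g) w by move=> w _; rewrite lee_fin.
have cv w : (fun n => (a n w * X w)%:E) @ \oo --> (g w * X w)%:E.
  apply: cvg_EFin; first exact: nearW.
  apply: cvgMl.
  exact: (@cvg_approx _ _ _ setT (EFin \o g) w f0 Logic.I (ltry _)).
have mg' n : measurable_fun A (fun w => (a n w * X w)%:E).
  apply/measurable_EFinP; apply: measurable_funM => //.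
    exact: measurable_funTS (ga n).2.1.
  exact: measurable_funTS.
have g'0 n w : A w -> 0 <= (a n w * X w)%:E.
  by move=> _; rewrite lee_fin mulr_ge0 //; exact: (ga n).1.
have nd w : A w -> {homo (fun n => (a n w * X w)%:E) : n m / (n <= m)%N >-> n <= m}.
  move=> _ n m nm; rewrite lee_fin ler_wpM2r //.
  exact/lefP/nd_approx.
have -> : \int[P]_(w in A) (g w * X w)%:E =
          \int[P]_(w in A) limn (fun n => (a n w * X w)%:E).
  by apply: eq_integral => w _; apply/esym/cvg_lim => //; exact: cv.
rewrite (monotone_convergence P mA mg' g'0 nd).
apply: lime_le.
  exact: cvgP (cvg_monotone_convergence mA mg' g'0 nd).
apply: nearW => n.
apply: le_trans ((ga n).2.2 A GA) _.
apply: ge0_le_integral => //.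
- by move=> w _; rewrite lee_fin mulr_ge0 //; exact: (ga n).1.
- apply/measurable_EFinP; apply: measurable_funM => //.
    exact: measurable_funTS (ga n).2.1.
  exact: measurable_funTS.
- apply/measurable_EFinP; apply: measurable_funM => //.
    exact: measurable_funTS (wrt_meas mg).
  exact: measurable_funTS.
- move=> w _; rewrite lee_fin ler_wpM2r //.
  by have := @le_approx _ _ _ setT (EFin \o g) n w f0 Logic.I; rewrite lee_fin.
Qed.

End Ext.


Section Wrt.
Context d (T : measurableType d) (R : realType).

Lemma wrtP (G : set (set T)) (HG : Defs.sub_sigma_algebra G) (f : T -> R) :
  measurable_wrt G f <-> @measurable_fun _ _ (g_sigma_algebraType G) R setT f.
Proof.
have GE : @measurable _ (g_sigma_algebraType G) = G
  by exact: measurable_g_measurableTypeE HG.1.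
split => h.
- by move=> _ B mB; rewrite setTI GE; exact: h.
- by move=> B mB; have := h measurableT B mB; rewrite setTI GE.
Qed.

Lemma wrt_mono (G H : set (set T)) (f : T -> R) :
  G `<=` H -> measurable_wrt G f -> measurable_wrt H f.
Proof. by move=> GH h B mB; apply: GH; exact: h. Qed.

Lemma filt_mono (F : nat -> set (set T)) n : filtration_upto F n ->
  forall s t, (s <= t)%N -> (t <= n)%N -> F s `<=` F t.
Proof.
move=> [_ hF] s t st; elim: t st => [|t IH].
  by rewrite leqn0 => /eqP -> _.
move=> h tn; move: h; rewrite leq_eqVlt => /orP[/eqP -> //|]; rewrite ltnS => st.
apply: subset_trans (IH st (ltnW tn)) (hF t tn).
Qed.

End Wrt.

Section Ville.
Context d (T : measurableType d) (R : realType) (P : probability T R).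
Variables (F : nat -> set (set T)) (n : nat) (M : nat -> T -> R) (K : R).
Hypotheses (hF : filtration_upto F n) (K0 : (0 < K)%R)
  (M0 : forall t w, (0 <= M t w)%R) (Minit : forall w, M 0 w = 1%R)
  (mM : forall t, (t <= n)%N -> measurable_wrt (F t) (M t))
  (step : forall t, (t < n)%N -> forall A, F t A ->
     \int[P]_(w in A) (M t.+1 w)%:E <= \int[P]_(w in A) (M t w)%:E).

Definition Ev t := [set w | exists s, (1 <= s <= t)%N /\ (K <= M s w)%R].

Lemma Ev0 : Ev 0 = set0.
Proof. by apply/seteqP; split => w // [s [/andP[h1 h2]]]; move: (leq_trans h1 h2). Qed.

Lemma EvS t : Ev t.+1 = Ev t `|` [set w | (K <= M t.+1 w)%R].
Proof.
apply/seteqP; split => w /=.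
  move=> [s [/andP[s1 st] Ks]]; move: st; rewrite leq_eqVlt => /orP[/eqP [<-]|].
    by right.
  by rewrite ltnS => st; left; exists s; rewrite s1 st.
case=> [[s [/andP[s1 st] Ks]]|Kt].
  by exists s; split => //; rewrite s1 (leq_trans st (leqnSn t)).
by exists t.+1; split => //; rewrite leqnn.
Qed.

Lemma sigF t : (t <= n)%N -> Defs.sub_sigma_algebra (F t).
Proof. by move=> tn; exact: hF.1. Qed.
Arguments sigF [t].

Lemma FK t : (t <= n)%N -> F t [set w | (K <= M t w)%R].
Proof.
move=> tn; have := mM t tn _ (measurable_itv `[K, +oo[).
by congr (F t); apply/seteqP; split => w /=; rewrite in_itv /= andbT.
Qed.
Arguments FK [t].

Lemma FEv t : (t <= n)%N -> F t (Ev t).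
Proof.
elim: t => [|t IH] tn.
  rewrite Ev0 -(measurable_g_measurableTypeE (sigF tn).1); exact: measurable0.
rewrite EvS -(measurable_g_measurableTypeE (sigF tn).1); apply: measurableU.
  rewrite measurable_g_measurableTypeE; last exact: (sigF tn).1.
  exact: (@filt_mono _ _ _ _ hF t t.+1 (leqnSn t) tn) _ (IH (ltnW tn)).
by rewrite measurable_g_measurableTypeE; [exact: FK|exact: (sigF tn).1].
Qed.
Arguments FEv [t].

Lemma mEv t : (t <= n)%N -> measurable (Ev t).
Proof. by move=> tn; apply: (sigF tn).2; exact: FEv. Qed.
Arguments mEv [t].

Lemma mMt t : (t <= n)%N -> measurable_fun [set: T] (EFin \o M t).
Proof.
move=> tn; apply/measurable_EFinP => _ B mB; rewrite setTI.
by apply: (sigF tn).2; exact: mM t tn B mB.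
Qed.
Arguments mMt [t].

Lemma ville_inv {t} : (t <= n)%N ->
  K%:E * P (Ev t) + \int[P]_(w in ~` Ev t) (M t w)%:E <= 1.
Proof.
elim: t => [|t IH] tn.
  rewrite Ev0 measure0 mule0 add0e setC0.
  under eq_integral do rewrite Minit.
  rewrite integral_cst // mul1e; exact: probability_le1.
have tn' : (t <= n)%N := ltnW tn.
set D := ~` Ev t `&` [set w | (K <= M t.+1 w)%R].
have mD : measurable D.
  apply: measurableI; first exact/measurableC/mEv.
  by apply: (sigF tn).2; exact: FK.
have mC : measurable (~` Ev t.+1) by exact/measurableC/mEv.
have HsE : ~` Ev t = ~` Ev t.+1 `|` D.
  rewrite EvS setCU /D -setIUr; apply/esym.
  by rewrite setUC setUCr setIT.
have disj1 : [disjoint ~` Ev t.+1 & D].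
  apply/disj_set2P; apply/seteqP; split => // w []; rewrite EvS /D => /= nE [_ Kw].
  by apply: nE; right.
have PE : P (Ev t.+1) = P (Ev t) + P D.
  rewrite EvS (_ : Ev t `|` _ = Ev t `|` D); last first.
    by rewrite /D setUIr setUCr setTI.
  apply: measureU => //; first exact: mEv.
  by rewrite /D setIA setICr set0I.
have intD : K%:E * P D <= \int[P]_(w in D) (M t.+1 w)%:E.
  rewrite -integral_cst //; apply: ge0_le_integral => //.
  - by move=> w _; rewrite lee_fin ltW.
  - exact: measurable_funTS (mMt tn).
  - by move=> w [_ /=]; rewrite lee_fin.
have split_int : \int[P]_(w in ~` Ev t) (M t.+1 w)%:E =
   \int[P]_(w in ~` Ev t.+1) (M t.+1 w)%:E + \int[P]_(w in D) (M t.+1 w)%:E.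
  rewrite HsE ge0_integral_setU //.
  - exact: measurable_funTS (mMt tn).
  - by move=> w _; rewrite lee_fin.
have FC : F t (~` Ev t).
  rewrite -(measurable_g_measurableTypeE (sigF tn').1); apply: measurableC.
  by rewrite measurable_g_measurableTypeE; [exact: FEv|exact: (sigF tn').1].
have stp := step t tn _ FC.
apply: le_trans (IH tn').
rewrite PE ge0_muleDr //.
rewrite -addeA; apply: leeD => //.
apply: le_trans stp; rewrite split_int addeC.
by apply: leeD.
Qed.

Lemma ville : K%:E * P (Ev n) <= 1.
Proof.
apply: le_trans (ville_inv (leqnn n)); apply: leeDl.
apply: integral_ge0 => w _; rewrite lee_fin; exact: M0.
Qed.

End Ville.

Arguments wrtP {d T R G} HG {f}.
Arguments wrt_mono {d T R G H f}.
Arguments filt_mono {d T F n} hF {s t}.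

Lemma sum_wrt d (T : measurableType d) (R : realType) (F : nat -> set (set T)) n
  (hF : filtration_upto F n) (h : nat -> T -> R) :
  (forall i, (1 <= i <= n)%N -> measurable_wrt (F i) (h i)) ->
  forall t, (t <= n)%N -> measurable_wrt (F t) (fun w => \sum_(1 <= i < t.+1) h i w)%R.
Proof.
move=> hh; elim=> [|t IH] tn.
  have sig := hF.1 0%N tn.
  have -> : (fun w => \sum_(1 <= i < 1) h i w)%R = (fun _ => 0%R).
    by apply/funext => w; rewrite big_geq.
  by apply/(wrtP sig); exact: measurable_cst.
have sig := hF.1 t.+1 tn.
have -> : (fun w => \sum_(1 <= i < t.+2) h i w)%R =
          (fun w => \sum_(1 <= i < t.+1) h i w + h t.+1 w)%R.
  by apply/funext => w; rewrite big_nat_recr.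
apply/(wrtP sig); apply: measurable_funD; apply/(wrtP sig).
- exact: wrt_mono (filt_mono hF (leqnSn t) tn) (IH (ltnW tn)).
- by apply: hh; rewrite tn.
Qed.

Local Close Scope ereal_scope.

Theorem theorem3p3 (dsp : measure_display) (T : measurableType dsp)
  (R : realType) (P : probability T R) (n : nat)
  (F : nat -> set (set T)) (dd : nat -> T -> R) (v : nat -> T -> R)
  (alpha_ : nat -> R) (x beta : R) :
  mart_diff_seq P F dd n ->
  (forall i, (1 <= i <= n)%N ->
     measurable_wrt (F i.-1) (v i.-1) /\ (forall w, 0 < v i.-1 w)) ->
  (forall i, (1 <= i <= n)%N -> forall lam : R, 0 < lam ->
     condexp_le P (F i.-1) (fun w => expR (lam * dd i w))
                           (fun w => expR (lam ^+ 2 / 2 * v i.-1 w))) ->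
  (forall i, (1 <= i <= n)%N -> 0 <= alpha_ i) ->
  0 < x -> 0 < beta ->
  let alpha := \big[Num.max/0]_(1 <= i < n.+1) alpha_ i in
  let S t w := \sum_(1 <= i < t.+1) dd i w in
  let V t w := \sum_(1 <= i < t.+1) v i.-1 w in
  let event := [set w | exists t, (1 <= t <= n)%N /\
        x <= S t w /\
        V t w <= \sum_(1 <= i < t.+1) alpha_ i * dd i w + beta] in
  (P event <= (expR (- (x / (4 * alpha + 8 * beta / x))))%:E)%E.
Proof.
move=> [hF hd] hv hexp hal x0 b0; cbv beta zeta.
set alpha := \big[Num.max/0]_(1 <= i < n.+1) alpha_ i.
have al0 : 0 <= alpha by exact: bigmax_ge_id.
have alle i : (1 <= i <= n)%N -> alpha_ i <= alpha.
  by move=> hi; apply: le_bigmax_seq => //; rewrite mem_index_iota ltnS.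
set K0 := alpha * x + beta.
have K0p : 0 < K0 by rewrite /K0; apply: ltr_wpDl => //; exact: mulr_ge0 al0 (ltW x0).
set s := x / K0.
have sK : s * K0 = x by rewrite /s divfK // gt_eqF.
have sp : 0 < s by rewrite /s divr_gt0.
have sa : s * alpha <= 1.
  have h : (s * alpha - 1) * K0 = - beta.
    by rewrite mulrBl mul1r -mulrA (mulrC alpha) mulrA sK /K0 opprD addrA (mulrC x) subrr add0r.
  nra.
set c := s ^+ 2 / 2.
set th := s - c * alpha.
have thp : 0 < th.
  rewrite /th /c; nra.
set lam := fun i => th + c * alpha_ i.
have c0 : 0 <= c by rewrite /c divr_ge0 // sqr_ge0.
have lamp i : (1 <= i <= n)%N -> 0 < lam i.
  by move=> hi; rewrite /lam ltr_wpDr // mulr_ge0 // hal.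
have lams i : (1 <= i <= n)%N -> lam i <= s.
  move=> hi; rewrite /lam /th -lerBrDl opprB addrC subrK.
  by rewrite ler_wpM2l // alle.
have lamc i : (1 <= i <= n)%N -> lam i ^+ 2 / 2 <= c.
  move=> hi; rewrite /c ler_pM2r // ler_sqr; first exact: lams.
    exact: ltW (lamp i hi).
  exact: ltW.
have sig t : (t <= n)%N -> Defs.sub_sigma_algebra (F t) by move=> tn; exact: hF.1.
have mdd i : (1 <= i <= n)%N -> measurable_wrt (F i) (dd i) by move=> hi; case: (hd i hi).
have mvv i : (1 <= i <= n)%N -> measurable_wrt (F i) (v i.-1).
  move=> hi; case/andP: (hi) => i1 iN.
  exact: wrt_mono (filt_mono (conj hF.1 hF.2) (leq_pred i) iN) (hv i hi).1.
pose M t w := expR (\sum_(1 <= i < t.+1) (lam i * dd i w - lam i ^+ 2 / 2 * v i.-1 w)).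
have mM t : (t <= n)%N -> measurable_wrt (F t) (M t).
  move=> tn; apply/(wrtP (sig t tn)).
  apply: (measurableT_comp (f := expR)) => //.
  apply/(wrtP (sig t tn)).
  apply: (@sum_wrt _ _ _ F n (conj hF.1 hF.2)
    (fun i w => lam i * dd i w - lam i ^+ 2 / 2 * v i.-1 w)) => // i hi.
  apply/(wrtP (sig i (andP hi).2)); apply: measurable_funB.
    by apply: measurable_funM => //; apply/(wrtP (sig i (andP hi).2)); exact: mdd.
  by apply: measurable_funM => //; apply/(wrtP (sig i (andP hi).2)); exact: mvv.
have M0 t w : 0 <= M t w by exact: expR_ge0.
have Minit w : M 0%N w = 1 by rewrite /M big_geq // expR0.
have step t : (t < n)%N -> forall A, F t A ->
    (\int[P]_(w in A) (M t.+1 w)%:E <= \int[P]_(w in A) (M t w)%:E)%E.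
  move=> tn A FA.
  have hi : (1 <= t.+1 <= n)%N by rewrite tn.
  have tn' : (t <= n)%N := ltnW tn.
  pose l := lam t.+1.
  pose X w := expR (l * dd t.+1 w).
  pose Y w := expR (l ^+ 2 / 2 * v t w).
  pose g w := M t w * expR (- (l ^+ 2 / 2 * v t w)).
  have eX w : M t.+1 w = g w * X w.
    have h1 : M t.+1 w = M t w * expR (l * dd t.+1 w - l ^+ 2 / 2 * v t w).
      by rewrite /M (big_nat_recr t.+1) //= expRD.
    have h2 : expR (l * dd t.+1 w - l ^+ 2 / 2 * v t w) =
        expR (- (l ^+ 2 / 2 * v t w)) * expR (l * dd t.+1 w).
      by rewrite -expRD addrC.
    by rewrite h1 h2 /g /X mulrA.
  have eY w : M t w = g w * Y w.
    by rewrite /g /Y -mulrA -expRD addNr expR0 mulr1.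
  under eq_integral do rewrite eX.
  under [X in (_ <= X)%E]eq_integral do rewrite eY.
  have hXY : condexp_le P (F t) X Y := hexp t.+1 hi l (lamp _ hi).
  have mX : measurable_fun setT X.
    apply: (measurableT_comp (f := expR)) => //; apply: measurable_funM => //.
    exact: (@wrt_meas _ _ _ _ (sig _ (andP hi).2) _ (mdd _ hi)).
  have mY : measurable_fun setT Y.
    apply: (measurableT_comp (f := expR)) => //; apply: measurable_funM => //.
    exact: (@wrt_meas _ _ _ _ (sig _ tn') _ (hv _ hi).1).
  have g0 w : 0 <= g w by rewrite mulr_ge0 // expR_ge0.
  have mg : measurable_wrt (F t) g.
    apply/(wrtP (sig t tn')); apply: measurable_funM.
      by apply/(wrtP (sig t tn')); exact: mM.
    apply: (measurableT_comp (f := expR)) => //; apply: measurable_funN.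
    apply: measurable_funM => //.
    by apply/(wrtP (sig t tn')); exact: (hv _ hi).1.
  exact: (@ext_le _ _ _ P (F t) (sig t tn') X Y (fun w => expR_ge0 _) (fun w => expR_ge0 _) mX mY hXY g g0 mg A FA).
pose a := s * x / 2.
have hville := @ville _ _ _ P F n M (expR a) (conj hF.1 hF.2) (expR_gt0 a) M0 Minit mM step.
have hFc : filtration_upto F n := conj hF.1 hF.2.
pose S t w := \sum_(1 <= i < t.+1) dd i w.
pose V t w := \sum_(1 <= i < t.+1) v i.-1 w.
pose Al t w := \sum_(1 <= i < t.+1) alpha_ i * dd i w.
have mpre (f : T -> R) B : measurable_fun setT f -> measurable B -> measurable (f @^-1` B).
  by move=> mf mB; have := mf measurableT B mB; rewrite setTI.
have mS t : (t <= n)%N -> measurable_fun setT (S t).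
  move=> tn; exact: (@wrt_meas _ _ _ _ (sig t tn) _ (@sum_wrt _ _ _ F n hFc dd mdd t tn)).
have mV t : (t <= n)%N -> measurable_fun setT (V t).
  move=> tn; exact: (@wrt_meas _ _ _ _ (sig t tn) _
    (@sum_wrt _ _ _ F n hFc (fun i => v i.-1) mvv t tn)).
have mAl t : (t <= n)%N -> measurable_fun setT (Al t).
  move=> tn; apply: (@wrt_meas _ _ _ _ (sig t tn) _
    (@sum_wrt _ _ _ F n hFc (fun i w => alpha_ i * dd i w) _ t tn)).
  move=> i hi; apply/(wrtP (sig i (andP hi).2)); apply: measurable_funM => //.
  by apply/(wrtP (sig i (andP hi).2)); exact: mdd.
match goal with |- context [@mkset _ ?f] => set event := mkset f end.
have mev : measurable event.
  have -> : event = \bigcup_(t in [set t | (1 <= t <= n)%N])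
      (S t @^-1` `[x, +oo[ `&` (fun w => V t w - Al t w) @^-1` `]-oo, beta]).
    apply/seteqP; split => w.
      move=> [t [ht [h1 h2]]]; exists t => //=; rewrite !in_itv /= andbT.
      by split => //; rewrite lerBlDr addrC.
    move=> [t ht /= [h1 h2]]; exists t; split => //; move: h1 h2.
    by rewrite !in_itv /= andbT lerBlDr addrC => -> ->.
  apply: bigcup_measurable => t /= /andP[_ tn].
  apply: measurableI; apply: mpre; try exact: measurable_itv.
    exact: mS.
  by apply: measurable_funB; [exact: mV|exact: mAl].
have ea : th * x - c * beta = a.
  rewrite /a /th /c.
  have -> : (s - s ^+ 2 / 2 * alpha) * x - s ^+ 2 / 2 * beta = s * x - s / 2 * (s * K0).
    by rewrite /K0; ring.
  by rewrite sK; field.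
have sub : event `<=` @Ev _ _ _ M (expR a) n.
  move=> w [t [ht [Sx Vt]]]; exists t; split => //.
  have tn : (t <= n)%N := (andP ht).2.
  rewrite /M ler_expR -ea.
  have e1 : \sum_(1 <= i < t.+1) (lam i * dd i w - c * v i.-1 w) <=
            \sum_(1 <= i < t.+1) (lam i * dd i w - lam i ^+ 2 / 2 * v i.-1 w).
    apply: ler_sum_nat => i /andP[i1 it].
    have hi : (1 <= i <= n)%N by rewrite i1 (leq_trans _ tn).
    rewrite lerD2l lerN2 ler_wpM2r //; last exact: lamc.
    exact: ltW ((hv i hi).2 w).
  apply: le_trans e1.
  have e2 : \sum_(1 <= i < t.+1) (lam i * dd i w - c * v i.-1 w) =
     th * \sum_(1 <= i < t.+1) dd i w + c * \sum_(1 <= i < t.+1) (alpha_ i * dd i w)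
     - c * \sum_(1 <= i < t.+1) v i.-1 w.
    rewrite !mulr_sumr -big_split -sumrB; apply: eq_bigr => i _.
    by rewrite /lam /=; ring.
  rewrite e2.
  have h1 := ler_wpM2l (ltW thp) Sx.
  have h2 := ler_wpM2l c0 Vt.
  rewrite mulrDr in h2.
  lra.
have le1 : (P event <= P (@Ev _ _ _ M (expR a) n))%E.
  apply: le_measure => //; rewrite inE //.
  exact: (@mEv _ _ _ F n M (expR a) hFc mM n (leqnn n)).
have le2 : (P (@Ev _ _ _ M (expR a) n) <= (expR (- a))%:E)%E.
  have pfin : P (@Ev _ _ _ M (expR a) n) \is a fin_num.
    by rewrite ge0_fin_numE ?measure_ge0 // (le_lt_trans (probability_le1 _ _)) ?ltry //;
      exact: (@mEv _ _ _ F n M (expR a) hFc mM n (leqnn n)).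
  move: hville; rewrite -(fineK pfin) -EFinM !lee_fin expRN => hv'.
  by rewrite -(ler_pM2l (expR_gt0 a)) mulfV // gt_eqF // expR_gt0.
apply: (le_trans le1); apply: (le_trans le2); rewrite lee_fin ler_expR lerN2.
set D := 4 * alpha + 8 * beta / x.
have Dx : D * x = 4 * K0 + 4 * beta.
  by rewrite /D /K0; field; rewrite gt_eqF.
have Dp : 0 < D.
  by rewrite /D; apply: ltr_wpDl; [apply: mulr_ge0 | apply: mulr_gt0; [apply: mulr_gt0|rewrite invr_gt0]].
rewrite ler_pdivrMr //.
have -> : a * D = 2 * (s * K0) + 2 * (s * beta).
  rewrite /a (_ : s * x / 2 * D = s * (D * x) / 2); last by ring.
  by rewrite Dx; field.
rewrite sK.
have := mulr_gt0 sp b0.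
lra.
Qed.
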